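(* There exists an order-reversing embedding $\mathcal{E} \to \mathcal{G}$.
   Context: A pca is a set with a partial binary application operation containing distinct $\mathrm{s},\mathrm{k}$ with $\mathrm{k}ab\downarrow=a$, $\mathrm{s}ab\downarrow$, $\mathrm{s}abc\simeq(ac)(bc)$. An embedding of pcas is an injective map $f$ with: if $ab$ is defined then $f(a)f(b)$ is defined and equals $f(ab)$. $\mathcal{G}$ is $\mathcal{P}(\omega)$ with application $A\cdot B=\{n:\exists u\,(\langle n,u\rangle\in A\wedge D_u\subseteq B)\}$, where $\langle\cdot,\cdot\rangle$ is a bijective computable pairing with $\langle 0,0\rangle=0$ and $D_u$ is the finite set with canonical code $u$. $\mathcal{E}$ is the sub-pca consisting of the c.e. sets. An embedding $f$ is order-reversing if for all $A\subseteq B$ in its domain, $f(B)\subseteq f(A)$. *)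

(* Defs.v *)
From Stdlib Require Import Arith List.
Import ListNotations.

Inductive PR : nat -> Type :=
| PRzero (k : nat) : PR k
| PRsucc : PR 1
| PRproj (k i : nat) : PR k
| PRcomp (k m : nat) : PR m -> list (PR k) -> PR k
| PRrec (k : nat) : PR k -> PR (S (S k)) -> PR (S k)
| PRmu (k : nat) : PR (S k) -> PR k.

Inductive PR_eval : forall k, PR k -> list nat -> nat -> Prop :=
| ev_zero k xs : length xs = k -> PR_eval k (PRzero k) xs 0
| ev_succ x : PR_eval 1 PRsucc [x] (S x)
| ev_proj k i xs : length xs = k -> i < k ->
    PR_eval k (PRproj k i) xs (nth i xs 0)
| ev_comp k m g hs xs ys y : length xs = k -> length hs = m ->
    Forall2 (fun h y => PR_eval k h xs y) hs ys ->
    PR_eval m g ys y -> PR_eval k (PRcomp k m g hs) xs y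
| ev_rec0 k g h xs y : PR_eval k g xs y -> PR_eval (S k) (PRrec k g h) (0 :: xs) y
| ev_recS k g h n xs z y : PR_eval (S k) (PRrec k g h) (n :: xs) z ->
    PR_eval (S (S k)) h (n :: z :: xs) y ->
    PR_eval (S k) (PRrec k g h) (S n :: xs) y
| ev_mu k g xs y : PR_eval (S k) g (y :: xs) 0 ->
    (forall z, z < y -> exists v, v <> 0 /\ PR_eval (S k) g (z :: xs) v) ->
    PR_eval k (PRmu k g) xs y.

Definition ce (A : nat -> Prop) : Prop :=
  exists p : PR 1, forall n, A n <-> exists y, PR_eval 1 p [n] y.

Definition cpair (x y : nat) : nat := (x + y) * (x + y + 1) / 2 + y.

(* Canonical finite sets: D_u = { i | bit i of u is 1 }. *)
Definition D (u : nat) (i : nat) : Prop := Nat.testbit u i = true.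

(* Application in G = P(omega): A.B = { n | exists u, <n,u> in A /\ D_u subset B }. *)
Definition gapp (A B : nat -> Prop) : nat -> Prop :=
  fun n => exists u, A (cpair n u) /\ (forall i, D u i -> B i).

(* An embedding E -> G (E is total, G is total, so the partial-application
   condition reduces to preservation of application), defined on c.e. sets. *)
Definition embedding_E_G (f : (nat -> Prop) -> (nat -> Prop)) : Prop :=
  (forall A B, ce A -> ce B -> f A = f B -> A = B) /\
  (forall A B, ce A -> ce B -> f (gapp A B) = gapp (f A) (f B)).

Definition order_reversing_on_E (f : (nat -> Prop) -> (nat -> Prop)) : Prop :=
  forall A B, ce A -> ce B -> (forall n, A n -> B n) -> (forall n, f B n -> f A n).

(* Main.v *)
Require Import Defs.
From Stdlib Require Import Arith List Lia Eqdep_dec FunctionalExtensionality PropExtensionality.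
Import ListNotations.
From mathcomp Require choice.
Module Enc.
Import choice.
Definition pk (t : GenTree.tree nat) : nat := pickle t.
Lemma pk_inj t1 t2 : pk t1 = pk t2 -> t1 = t2.
Proof. intro H. pose proof (pickleK t1) as E1. pose proof (pickleK t2) as E2. unfold pk in H. rewrite H in E1. congruence. Qed.
Definition tr := GenTree.tree nat.
Definition L (n : nat) : tr := GenTree.Leaf n.
Definition N (n : nat) (l : list tr) : tr := GenTree.Node n l.
End Enc.
Import Enc.

Fixpoint enc {k} (p : PR k) : tr :=
  match p with
  | PRzero k => N 0 [L k]
  | PRsucc => N 1 []
  | PRproj k i => N 2 [L k; L i]
  | PRcomp k m g hs => N 3 (L k :: L m :: enc g :: map (@enc k) hs)
  | PRrec k g h => N 4 [L k; enc g; enc h]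
  | PRmu k g => N 5 [L k; enc g]
  end.

Section Ind.
Variable P : forall k, PR k -> Prop.
Hypothesis H0 : forall k, P k (PRzero k).
Hypothesis H1 : P 1 PRsucc.
Hypothesis H2 : forall k i, P k (PRproj k i).
Hypothesis H3 : forall k m g hs, P m g -> (forall h, In h hs -> P k h) -> P k (PRcomp k m g hs).
Hypothesis H4 : forall k g h, P k g -> P (S (S k)) h -> P (S k) (PRrec k g h).
Hypothesis H5 : forall k g, P (S k) g -> P k (PRmu k g).
Fixpoint PR_ind' k (p : PR k) : P k p :=
  match p with
  | PRzero k => H0 k
  | PRsucc => H1
  | PRproj k i => H2 k i
  | PRcomp k m g hs => H3 k m g hs (PR_ind' m g)
      ((fix G (l : list (PR k)) : forall h, In h l -> P k h :=
         match l with
         | nil => fun h H => False_ind _ H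
         | h0 :: t => fun h H => match H with
                     | or_introl e => eq_ind h0 (P k) (PR_ind' k h0) h e
                     | or_intror H' => G t h H' end
         end) hs)
  | PRrec k g h => H4 k g h (PR_ind' k g) (PR_ind' (S (S k)) h)
  | PRmu k g => H5 k g (PR_ind' (S k) g)
  end.
End Ind.

Lemma enc_inj_gen : forall k (p : PR k) k' (q : PR k'), enc p = enc q ->
  existT PR k p = existT PR k' q.
Proof.
  apply (PR_ind' (fun k p => forall k' (q : PR k'), enc p = enc q -> existT PR k p = existT PR k' q)).
  - intros k k' q E; destruct q; simpl in *; unfold N, L in *; try discriminate; solve [reflexivity | injection E; intros; subst; reflexivity].
  - intros k' q E; destruct q; simpl in *; unfold N, L in *; try discriminate; solve [reflexivity | injection E; intros; subst; reflexivity].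
  - intros k i k' q E; destruct q; simpl in *; unfold N, L in *; try discriminate; solve [reflexivity | injection E; intros; subst; reflexivity].
  - intros k m g hs IHg IHhs k' q E; destruct q; simpl in *; unfold N, L in *; try discriminate.
    injection E; intros Hl Hg Hm Hk; subst.
    specialize (IHg _ _ Hg).
    apply inj_pair2_eq_dec in IHg; [|exact Nat.eq_dec]. subst.
    assert (hs = l).
    { clear E. revert l Hl. induction hs as [|a hs IH]; intros [|b l] Hl; simpl in Hl; try discriminate; auto.
      injection Hl; intros Ht Ha.
      assert (E' := IHhs a (or_introl eq_refl) _ _ Ha).
      apply inj_pair2_eq_dec in E'; [|exact Nat.eq_dec]. subst.
      f_equal. apply IH; [intros; eapply IHhs; [apply in_cons; eassumption | assumption] | exact Ht]. }
    subst; reflexivity.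
  - intros k g h IHg IHh k' q E; destruct q; simpl in *; unfold N, L in *; try discriminate.
    injection E; intros Hh Hg Hk; subst.
    specialize (IHg _ _ Hg). specialize (IHh _ _ Hh).
    apply inj_pair2_eq_dec in IHg; [|exact Nat.eq_dec].
    apply inj_pair2_eq_dec in IHh; [|exact Nat.eq_dec]. subst; reflexivity.
  - intros k g IHg k' q E; destruct q; simpl in *; unfold N, L in *; try discriminate.
    injection E; intros Hg Hk; subst.
    specialize (IHg _ _ Hg).
    apply inj_pair2_eq_dec in IHg; [|exact Nat.eq_dec]. subst; reflexivity.
Qed.

Lemma enc_inj (p q : PR 1) : pk (enc p) = pk (enc q) -> p = q.
Proof. intro H. apply pk_inj in H. apply enc_inj_gen in H.
  apply inj_pair2_eq_dec in H; [exact H|exact Nat.eq_dec]. Qed.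
Definition T s := s * (s + 1) / 2.
Lemma T_S s : T (S s) = T s + S s.
Proof. unfold T. replace (S s * (S s + 1)) with (s * (s+1) + S s * 2) by lia.
  rewrite Nat.div_add by lia. reflexivity. Qed.
Lemma T_lt s d : T s + s < T (s + S d).
Proof. induction d.
  - rewrite Nat.add_1_r, T_S. lia.
  - replace (s + S (S d)) with (S (s + S d)) by lia. rewrite T_S. lia. Qed.
Lemma cpair_T x y : cpair x y = T (x + y) + y.
Proof. reflexivity. Qed.
Lemma cpair_lt x y x' y' : x + y < x' + y' -> cpair x y < cpair x' y'.
Proof. intro H. rewrite !cpair_T.
  replace (x' + y') with ((x + y) + S (x' + y' - (x + y) - 1)) by lia.
  pose proof (T_lt (x+y) (x' + y' - (x + y) - 1)). lia. Qed.
Lemma cpair_inj x y x' y' : cpair x y = cpair x' y' -> x = x' /\ y = y'.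
Proof. intro H. destruct (lt_eq_lt_dec (x+y) (x'+y')) as [[h|h]|h].
  - apply cpair_lt in h. lia.
  - rewrite !cpair_T, h in H. lia.
  - apply cpair_lt in h. lia. Qed.
Lemma cpair_ge x y : y <= cpair x y.
Proof. rewrite cpair_T. lia. Qed.

Definition dom (p : PR 1) (n : nat) : Prop := exists y, PR_eval 1 p [n] y.
Definition tag (p : PR 1) : nat := cpair 0 (2 * (pk (enc p) + 1) + 1).

Inductive Mem : (nat -> Prop) -> nat -> Prop :=
| mtag A p : (forall n, A n -> dom p n) -> Mem A (tag p)
| mpair A p n : Mem (gapp A (dom p)) n -> Mem A (cpair n (2 ^ tag p)).

Lemma Mem_pos A x : Mem A x -> x <> 0.
Proof. intros H; destruct H.
  - unfold tag. pose proof (cpair_ge 0 (2 * (pk (enc p) + 1) + 1)). lia.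
  - pose proof (cpair_ge n (2 ^ tag p)). pose proof (Nat.pow_nonzero 2 (tag p)). lia. Qed.

Lemma tag_not_pair p n t : tag p <> cpair n (2 ^ t).
Proof. unfold tag. intro H. apply cpair_inj in H. destruct H as [_ H].
  destruct t; simpl in H; lia. Qed.

Lemma tag_inj p q : tag p = tag q -> p = q.
Proof. unfold tag. intro H. apply cpair_inj in H. apply enc_inj. lia. Qed.

Lemma Mem_anti X x : Mem X x -> forall Y, (forall n, Y n -> X n) -> Mem Y x.
Proof. induction 1; intros Y HY.
  - apply mtag. auto.
  - apply mpair. apply IHMem. intros m [u [Hu Hd]]. exists u; split; auto. Qed.

Lemma Mem_tag X p : Mem X (tag p) -> forall n, X n -> dom p n.
Proof. intro H. inversion H; subst.
  - apply tag_inj in H0. subst. auto.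
  - exfalso. eapply tag_not_pair; eauto. Qed.

Lemma D_pow t i : D (2 ^ t) i <-> i = t.
Proof. unfold D. rewrite Nat.pow2_bits_eqb. rewrite Nat.eqb_eq. split; auto. Qed.

Lemma hom A p : forall n, Mem (gapp A (dom p)) n <-> gapp (Mem A) (Mem (dom p)) n.
Proof. intro n; split.
  - intro H. exists (2 ^ tag p). split.
    + apply mpair; auto.
    + intros i Hi. apply D_pow in Hi. subst. apply mtag. auto.
  - intros [u [Hu Hd]]. inversion Hu; subst.
    + exfalso. unfold tag in H. apply cpair_inj in H. destruct H as [_ H]. subst u.
      assert (D (2 * (pk (enc p0) + 1) + 1) 0) by (apply Nat.testbit_odd_0).
      apply Hd in H. apply Mem_pos in H. auto.
    + apply cpair_inj in H. destruct H as [Ha Hb]; subst.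
      assert (Hm : Mem (dom p) (tag p0)) by (apply Hd; apply D_pow; reflexivity).
      pose proof (Mem_tag _ _ Hm) as Hsub.
      eapply Mem_anti; [exact H1|]. intros m [u [Hu' Hd']]. exists u; split; auto. Qed.

Lemma ce_dom A : ce A -> exists p, A = dom p.
Proof. intros [p Hp]. exists p. apply functional_extensionality. intro n.
  apply propositional_extensionality. apply Hp. Qed.

Theorem theorem7p12 :
  exists f : (nat -> Prop) -> (nat -> Prop),
    embedding_E_G f /\ order_reversing_on_E f.
Proof.
  exists Mem. split; [split|].
  - intros A B HA HB E.
    destruct (ce_dom _ HA) as [p ->]. destruct (ce_dom _ HB) as [q ->].
    assert (H1 : Mem (dom p) (tag p)) by (apply mtag; auto).
    assert (H2 : Mem (dom q) (tag q)) by (apply mtag; auto).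
    rewrite E in H1. rewrite <- E in H2.
    pose proof (Mem_tag _ _ H1). pose proof (Mem_tag _ _ H2).
    apply functional_extensionality. intro n. apply propositional_extensionality. split; auto.
  - intros A B HA HB. destruct (ce_dom _ HB) as [p ->].
    apply functional_extensionality. intro n. apply propositional_extensionality. apply hom.
  - intros A B HA HB HAB n H. eapply Mem_anti; eauto.
Qed.
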